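(* For every MSO-formula $\phi(Y)$ (over graphs, with one free set variable $Y$) there exists an MSO-formula $\phi^*(x_1,x_2,Y)$ such that for all graphs $G$, all edge sets $F\subseteq E^G$ and all distinct edges $e_1,e_2\in E^G\setminus F$ we have \[ G\models\phi^*(e_1,e_2,F)\iff G^{e_1\times e_2}\models\phi(F). \]
   Context: Graphs are finite, undirected, loop-free, and may have multiple edges. A graph $G$ is viewed as a relational structure with universe $U^G:=V^G\cup E^G$, unary relations $V$ (vertices) and $E$ (edges), and binary incidence relation $I$ where $Ixy$ holds iff $x$ is a vertex and $y$ an edge with endpoint $x$. Monadic second-order logic (MSO) over graphs has individual variables (ranging over elements of $U^G$) and set variables (ranging over subsets of $U^G$); atomic formulas are $Vx$, $Ex$, $Ixy$, $Xx$ (and equality $x=y$), and formulas are closed under $\neg,\wedge,\vee,\to$ and existential/universal quantification over individual and set variables, with the usual semantics. $G\models\phi(a_1,\dots,A_1,\dots)$ means $G$ satisfies $\phi$ when the free variables are interpreted by the given elements and sets. For a graph $G$ and distinct edges $e_1,e_2\in E^G$, $G^{e_1\times e_2}$ is the graph obtained from $G$ by deleting $e_1$ and $e_2$, adding a new vertex $x$, and adding four edges joining $x$ to the endpoints of $e_1$ and to the endpoints of $e_2$. (If $F\subseteq E^G\setminus\{e_1,e_2\}$, then $F$ is also a set of edges of $G^{e_1\times e_2}$.) *)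

(* Defs.v *)
From mathcomp Require Import all_boot.
Set Implicit Arguments. Unset Strict Implicit. Unset Printing Implicit Defensive.

(* Finite, loop-free multigraphs: a finite vertex type, a finite edge type,
   and for each edge an (ordered, but only used symmetrically) pair of
   distinct endpoints. *)
Record graph := Graph {
  gV : finType;
  gE : finType;
  ends : gE -> (gV * gV)%type;
  ends_loopfree : forall e, (ends e).1 != (ends e).2 }.

Definition univ (G : graph) : finType := (gV G + gE G)%type.

Definition isV (G : graph) (u : univ G) : bool :=
  if u is inl _ then true else false.
Definition isE (G : graph) (u : univ G) : bool :=
  if u is inr _ then true else false.
Definition inc (G : graph) (x y : univ G) : bool :=
  match x, y with
  | inl v, inr e => (v == (ends e).1) || (v == (ends e).2)
  | _, _ => false
  end.

(* MSO syntax: individual variables and set variables are indexed by nat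
   (two separate namespaces). *)
Inductive form : Type :=
  | FV   of nat
  | FE   of nat
  | FI   of nat & nat
  | FIn  of nat & nat
  | FEq  of nat & nat
  | FNeg of form
  | FAnd of form & form
  | FOr  of form & form
  | FImp of form & form
  | FEx  of nat & form
  | FAll of nat & form
  | FExS of nat & form
  | FAllS of nat & form.

Fixpoint ifree (n : nat) (f : form) : bool :=
  match f with
  | FV x | FE x => x == n
  | FI x y | FEq x y => (x == n) || (y == n)
  | FIn x _ => x == n
  | FNeg g => ifree n g
  | FAnd g h | FOr g h | FImp g h => ifree n g || ifree n h
  | FEx x g | FAll x g => (x != n) && ifree n g
  | FExS _ g | FAllS _ g => ifree n g
  end.

Fixpoint sfree (n : nat) (f : form) : bool :=
  match f with
  | FV _ | FE _ | FI _ _ | FEq _ _ => false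
  | FIn _ X => X == n
  | FNeg g => sfree n g
  | FAnd g h | FOr g h | FImp g h => sfree n g || sfree n h
  | FEx _ g | FAll _ g => sfree n g
  | FExS X g | FAllS X g => (X != n) && sfree n g
  end.

Definition upd (T : Type) (s : nat -> T) (n : nat) (a : T) : nat -> T :=
  fun m => if m == n then a else s m.

Fixpoint sat (G : graph) (ia : nat -> univ G) (sa : nat -> {set univ G})
    (f : form) : Prop :=
  match f with
  | FV x => isV (ia x)
  | FE x => isE (ia x)
  | FI x y => inc (ia x) (ia y)
  | FIn x X => ia x \in sa X
  | FEq x y => ia x = ia y
  | FNeg g => ~ sat ia sa g
  | FAnd g h => sat ia sa g /\ sat ia sa h
  | FOr g h => sat ia sa g \/ sat ia sa h
  | FImp g h => sat ia sa g -> sat ia sa h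
  | FEx x g => exists u : univ G, sat (upd ia x u) sa g
  | FAll x g => forall u : univ G, sat (upd ia x u) sa g
  | FExS X g => exists A : {set univ G}, sat ia (upd sa X A) g
  | FAllS X g => forall A : {set univ G}, sat ia (upd sa X A) g
  end.

(* The graph G^{e1 x e2}: vertices option V (None is the new vertex x);
   edges: the old edges other than e1, e2, plus four new edges
   x--(ends e1).1, x--(ends e1).2, x--(ends e2).1, x--(ends e2).2. *)
Section Splice.
Variables (G : graph) (e1 e2 : gE G).

Definition kept_edge : finType := {e : gE G | (e != e1) && (e != e2)}.
Definition splice_E : finType := (kept_edge + 'I_4)%type.
Definition splice_V : finType := option (gV G).

Definition new_end (i : 'I_4) : gV G :=
  match val i with
  | 0 => (ends e1).1
  | 1 => (ends e1).2
  | 2 => (ends e2).1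
  | _ => (ends e2).2
  end.

Definition splice_ends (e : splice_E) : (splice_V * splice_V)%type :=
  match e with
  | inl k => (Some (ends (val k)).1, Some (ends (val k)).2)
  | inr i => (None, Some (new_end i))
  end.

Lemma splice_loopfree e : (splice_ends e).1 != (splice_ends e).2.
Proof.
case: e => [k|i] //=.
by rewrite (inj_eq (@Some_inj _)) ends_loopfree.
Qed.

Definition splice : graph := @Graph splice_V splice_E splice_ends splice_loopfree.

Definition lift_edges (F : {set gE G}) : {set gE splice} :=
  [set e : splice_E | if e is inl k then val k \in F else false].
End Splice.

Definition edge_set (G : graph) (F : {set gE G}) : {set univ G} :=
  [set (inr e : univ G) | e in F].

(* Main.v *)
Require Import Defs.
From mathcomp Require Import all_boot.
From mathcomp Require Import zify.
Set Implicit Arguments. Unset Strict Implicit. Unset Printing Implicit Defensive.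

Inductive ik := KOld | KNw | K1 | K2.
Inductive sk := SInit | SB of bool.

Definition s1 n := (3*n).+1.
Definition s2 n := (3*n).+2.
Definition s3 n := (3*n).+3.
Definition tT := FEq 0 0.
Definition tF := FNeg tT.

Definition guard k y := match k with
 | KOld => FAnd (FNeg (FEq y 0)) (FNeg (FEq y 1))
 | KNw => FEq y 0 | K1 => FI y 0 | K2 => FI y 1 end.

Definition exq n k g := FEx n.+2 (FAnd (guard k n.+2) g).
Definition alq n k g := FAll n.+2 (FImp (guard k n.+2) g).

Fixpoint tr (ei : nat -> ik) (es : nat -> sk) (f : form) : form :=
  match f with
  | FV x => match ei x with KOld => FV x.+2 | KNw => tT | _ => tF end
  | FE x => match ei x with KOld => FE x.+2 | KNw => tF | _ => tT end
  | FI x y => match ei x, ei y with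
     | KOld, KOld => FI x.+2 y.+2
     | KOld, K1 | KOld, K2 => FEq x.+2 y.+2
     | KNw, K1 | KNw, K2 => tT
     | _, _ => tF end
  | FEq x y => match ei x, ei y with
     | KOld, KOld | K1, K1 | K2, K2 => FEq x.+2 y.+2
     | KNw, KNw => tT
     | _, _ => tF end
  | FIn x X => match es X with
     | SInit => if ei x is KOld then FIn x.+2 0 else tF
     | SB b => match ei x with
        | KOld => FIn x.+2 (s1 X)
        | KNw => if b then tT else tF
        | K1 => FIn x.+2 (s2 X)
        | K2 => FIn x.+2 (s3 X) end end
  | FNeg g => FNeg (tr ei es g)
  | FAnd g h => FAnd (tr ei es g) (tr ei es h)
  | FOr g h => FOr (tr ei es g) (tr ei es h)
  | FImp g h => FImp (tr ei es g) (tr ei es h)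
  | FEx n g =>
       FOr (FOr (exq n KOld (tr (upd ei n KOld) es g)) (exq n KNw (tr (upd ei n KNw) es g)))
           (FOr (exq n K1 (tr (upd ei n K1) es g)) (exq n K2 (tr (upd ei n K2) es g)))
  | FAll n g =>
       FAnd (FAnd (alq n KOld (tr (upd ei n KOld) es g)) (alq n KNw (tr (upd ei n KNw) es g)))
           (FAnd (alq n K1 (tr (upd ei n K1) es g)) (alq n K2 (tr (upd ei n K2) es g)))
  | FExS n g => FExS (s1 n) (FExS (s2 n) (FExS (s3 n)
       (FOr (tr ei (upd es n (SB false)) g) (tr ei (upd es n (SB true)) g))))
  | FAllS n g => FAllS (s1 n) (FAllS (s2 n) (FAllS (s3 n)
       (FAnd (tr ei (upd es n (SB false)) g) (tr ei (upd es n (SB true)) g))))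
  end.

Ltac fin := repeat (case/orP); move/eqP=> <-;
  first [left; done | right; right; eexists; split; [|reflexivity]; by rewrite /= eqxx ?orbT].

Lemma tr_ifree f : forall ei es k, ifree k (tr ei es f) ->
  k = 0 \/ k = 1 \/ exists m, ifree m f /\ k = m.+2.
Proof.
elim: f => [x|x|x y|x X|x y|g IH|g IHg h IHh|g IHg h IHh|g IHg h IHh|n g IH|n g IH|n g IH|n g IH]
  ei es k /=.
- by case: (ei x) => /=; fin.
- by case: (ei x) => /=; fin.
- by case: (ei x); case: (ei y) => /=; fin.
- by case: (es X) => [|[]]; case: (ei x) => /=; fin.
- by case: (ei x); case: (ei y) => /=; fin.
- exact: IH.
- case/orP=> [/IHg|/IHh] [->|[->|[m [Hm ->]]]]; auto; right; right; exists m; by rewrite Hm ?orbT.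
- case/orP=> [/IHg|/IHh] [->|[->|[m [Hm ->]]]]; auto; right; right; exists m; by rewrite Hm ?orbT.
- case/orP=> [/IHg|/IHh] [->|[->|[m [Hm ->]]]]; auto; right; right; exists m; by rewrite Hm ?orbT.
- have gen : forall kk, ifree k (exq n kk (tr (upd ei n kk) es g)) ->
    k = 0 \/ k = 1 \/ exists m, ((n != m) && ifree m g) /\ k = m.+2.
    move=> kk /= /andP [Hn /orP [Hg|/IH [->|[->|[m [Hm Ek]]]]]]; auto.
    + by case: kk Hg => /=; rewrite ?orbF; repeat case/orP; move/eqP=> Ek; subst k;
      rewrite ?eqxx in Hn; auto.
    + right; right; exists m; split => //; rewrite Hm andbT; apply/eqP=> E; subst.
      by rewrite eqxx in Hn.
  by case/orP=> [/orP [] | /orP []] /gen.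
- have gen : forall kk, ifree k (alq n kk (tr (upd ei n kk) es g)) ->
    k = 0 \/ k = 1 \/ exists m, ((n != m) && ifree m g) /\ k = m.+2.
    move=> kk /= /andP [Hn /orP [Hg|/IH [->|[->|[m [Hm Ek]]]]]]; auto.
    + by case: kk Hg => /=; rewrite ?orbF; repeat case/orP; move/eqP=> Ek; subst k;
      rewrite ?eqxx in Hn; auto.
    + right; right; exists m; split => //; rewrite Hm andbT; apply/eqP=> E; subst.
      by rewrite eqxx in Hn.
  by case/orP=> [/orP [] | /orP []] /gen.
- by case/orP=> /IH.
- by case/orP=> /IH.
Qed.

Lemma tr_sfree f : forall ei es k, sfree k (tr ei es f) ->
  k = 0 \/ exists m, [/\ sfree m f, es m <> SInit & (k = s1 m \/ k = s2 m \/ k = s3 m)].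
Proof.
elim: f => [x|x|x y|x X|x y|g IH|g IHg h IHh|g IHg h IHh|g IHg h IHh|n g IH|n g IH|n g IH|n g IH]
  ei es k /=.
- by case: (ei x).
- by case: (ei x).
- by case: (ei x); case: (ei y).
- case E: (es X) => [|b]; case: (ei x) => //=; try (case: b E => E //=);
  try (by move/eqP=> <-; left);
  move/eqP=> <-; right; exists X; split; rewrite ?eqxx ?E //; auto.
- by case: (ei x); case: (ei y).
- exact: IH.
- case/orP=> [/IHg|/IHh] [->|[m [Hm E Hk]]]; auto; right; exists m; by rewrite Hm ?orbT.
- case/orP=> [/IHg|/IHh] [->|[m [Hm E Hk]]]; auto; right; exists m; by rewrite Hm ?orbT.
- case/orP=> [/IHg|/IHh] [->|[m [Hm E Hk]]]; auto; right; exists m; by rewrite Hm ?orbT.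
- by case/orP=> [/orP [] | /orP []] /IH.
- by case/orP=> [/orP [] | /orP []] /IH.
- case/and3P=> H1 H2 /andP [H3 /orP [] /IH [->|[m [Hm E Hk]]]]; auto;
   (case: (eqVneq m n) => [Emn|Nmn]; [subst m; exfalso;
     case: Hk => [Hk|[Hk|Hk]]; subst k; rewrite ?eqxx in H1 H2 H3; done|]);
   right; exists m; rewrite Hm andbT eq_sym Nmn /upd (negbTE Nmn) in E *; done.
- case/and3P=> H1 H2 /andP [H3 /orP [] /IH [->|[m [Hm E Hk]]]]; auto;
   (case: (eqVneq m n) => [Emn|Nmn]; [subst m; exfalso;
     case: Hk => [Hk|[Hk|Hk]]; subst k; rewrite ?eqxx in H1 H2 H3; done|]);
   right; exists m; rewrite Hm andbT eq_sym Nmn /upd (negbTE Nmn) in E *; done.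
Qed.
Set Bullet Behavior "Strict Subproofs".

Notation i0 := (@Ordinal 4 0 isT).
Notation i1 := (@Ordinal 4 1 isT).
Notation i2 := (@Ordinal 4 2 isT).
Notation i3 := (@Ordinal 4 3 isT).

Section Sem.
Variables (G : graph) (e1 e2 : gE G) (F : {set gE G}).
Notation S := (splice e1 e2).

Definition dec_old (u : univ G) : univ S :=
  match u with
  | inl v => inl (Some v)
  | inr e => match (insub e : option (kept_edge e1 e2)) with
             | Some k => inr (inl k) | None => inl None end
  end.
Definition dec1 (u : univ G) : univ S :=
  match u with
  | inl v => inr (inr (if v == (ends e1).1 then i0 else i1))
  | inr _ => inl None end.
Definition dec2 (u : univ G) : univ S :=
  match u with
  | inl v => inr (inr (if v == (ends e2).1 then i2 else i3))
  | inr _ => inl None end.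

Definition Rind (k : ik) (u : univ G) (u' : univ S) : Prop :=
  match k with
  | KOld => [/\ u <> inr e1, u <> inr e2 & u' = dec_old u]
  | KNw => u' = inl None
  | K1 => inc u (inr e1) /\ u' = dec1 u
  | K2 => inc u (inr e2) /\ u' = dec2 u
  end.

Definition Rset (k : sk) (sa : nat -> {set univ G}) n (S' : {set univ S}) : Prop :=
  match k with
  | SInit => S' = edge_set (lift_edges e1 e2 F)
  | SB b => [/\ forall u, u <> inr e1 -> u <> inr e2 -> (dec_old u \in S') = (u \in sa (s1 n)),
     (inl None \in S') = b,
     forall u, inc u (inr e1) -> (dec1 u \in S') = (u \in sa (s2 n)) &
     forall u, inc u (inr e2) -> (dec2 u \in S') = (u \in sa (s3 n))]
  end.

Lemma dec_old_val (k : kept_edge e1 e2) : dec_old (inr (val k)) = inr (inl k).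
Proof. by rewrite /dec_old valK. Qed.

Lemma Rind_cases k u u' : Rind k u u' ->
  match k with
  | KOld => (exists v, u = inl v /\ u' = inl (Some v)) \/
            (exists kk : kept_edge e1 e2, u = inr (val kk) /\ u' = inr (inl kk))
  | KNw => u' = inl None
  | K1 => (u = inl (ends e1).1 /\ u' = inr (inr i0)) \/ (u = inl (ends e1).2 /\ u' = inr (inr i1))
  | K2 => (u = inl (ends e2).1 /\ u' = inr (inr i2)) \/ (u = inl (ends e2).2 /\ u' = inr (inr i3))
  end.
Proof.
case: k => /=.
- case=> H1 H2 ->; case: u H1 H2 => [v|e] H1 H2; first by left; exists v.
  right.
  have He : (e != e1) && (e != e2).
    by apply/andP; split; apply/eqP => E; subst.
  exists (Sub e He); by rewrite /= -dec_old_val.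
- done.
- case: u => [v|e] [] //= /orP [] /eqP -> ->; rewrite ?eqxx; first by left.
  by rewrite eq_sym (negbTE (ends_loopfree e1)); right.
- case: u => [v|e] [] //= /orP [] /eqP -> ->; rewrite ?eqxx; first by left.
  by rewrite eq_sym (negbTE (ends_loopfree e2)); right.
Qed.

Lemma mem_edge_set (H : graph) (A : {set gE H}) (x : univ H) :
  (x \in edge_set A) = (if x is inr e then e \in A else false).
Proof.
case: x => [v|e]; rewrite /edge_set.
- by apply/imsetP => -[e _].
- apply/imsetP/idP => [[e' He [->]] //|He]; by exists e.
Qed.

Definition decK k u : univ S :=
  match k with KOld => dec_old u | KNw => inl None | K1 => dec1 u | K2 => dec2 u end.

Definition enc (Z1 Z2 Z3 : {set univ G}) (b : bool) : {set univ S} :=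
  [set u' : univ S | match u' with
    | inl None => b
    | inl (Some v) => (inl v : univ G) \in Z1
    | inr (inl k) => (inr (val k) : univ G) \in Z1
    | inr (inr i) => if val i < 2 then (inl (new_end e1 e2 i) : univ G) \in Z2
                     else (inl (new_end e1 e2 i) : univ G) \in Z3 end].

Lemma enc_R b sb n : Rset (SB b) sb n (enc (sb (s1 n)) (sb (s2 n)) (sb (s3 n)) b).
Proof.
split.
- case=> [v|e] h1 h2; first by rewrite inE.
  have He : (e != e1) && (e != e2) by apply/andP; split; apply/eqP=> E; subst.
  by rewrite /dec_old insubT /= inE /=.
- by rewrite inE.
- case=> [v|e] //= /orP [/eqP ->|/eqP ->]; rewrite inE /= ?eqxx /new_end //=.
  by rewrite eq_sym (negbTE (ends_loopfree e1)).
- case=> [v|e] //= /orP [/eqP ->|/eqP ->]; rewrite inE /= ?eqxx /new_end //=.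
  by rewrite eq_sym (negbTE (ends_loopfree e2)).
Qed.

Lemma Rset_ext k sa sb m S' : (forall j, j = s1 m \/ j = s2 m \/ j = s3 m -> sb j = sa j) ->
  Rset k sa m S' -> Rset k sb m S'.
Proof.
case: k => //= b E [A B C D]; split => //.
- by move=> u h1 h2; rewrite A // E; auto.
- by move=> u h; rewrite C // E; auto.
- by move=> u h; rewrite D // E; auto.
Qed.

End Sem.

Definition sa3 (T : finType) (sa : nat -> {set T}) n Z1 Z2 Z3 :=
  upd (upd (upd sa (s1 n) Z1) (s2 n) Z2) (s3 n) Z3.

Lemma sa3_at (T : finType) (sa : nat -> {set T}) n Z1 Z2 Z3 :
  [/\ sa3 sa n Z1 Z2 Z3 (s1 n) = Z1, sa3 sa n Z1 Z2 Z3 (s2 n) = Z2 &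
      sa3 sa n Z1 Z2 Z3 (s3 n) = Z3].
Proof.
have E1 : (s1 n == s3 n) = false by apply/negbTE/eqP; rewrite /s1 /s3; lia.
have E2 : (s1 n == s2 n) = false by apply/negbTE/eqP; rewrite /s1 /s2; lia.
have E3 : (s2 n == s3 n) = false by apply/negbTE/eqP; rewrite /s2 /s3; lia.
by rewrite /sa3 /upd E1 E2 E3 !eqxx.
Qed.

Lemma sa3_other (T : finType) (sa : nat -> {set T}) n m Z1 Z2 Z3 : m <> n ->
  forall j, j = s1 m \/ j = s2 m \/ j = s3 m -> sa3 sa n Z1 Z2 Z3 j = sa j.
Proof.
move=> ne j Hj; rewrite /sa3 /upd.
have -> : (j == s3 n) = false by apply/negbTE/eqP; rewrite /s1 /s2 /s3 in Hj *; lia.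
have -> : (j == s2 n) = false by apply/negbTE/eqP; rewrite /s1 /s2 /s3 in Hj *; lia.
have -> : (j == s1 n) = false by apply/negbTE/eqP; rewrite /s1 /s2 /s3 in Hj *; lia.
done.
Qed.


Section Sem2.
Variables (G : graph) (e1 e2 : gE G) (F : {set gE G}).
Notation S := (splice e1 e2).

Ltac dest H :=
  match type of H with
  | (exists _, _) \/ _ => destruct H as [[? [Ea Eb]]|[? [Ea Eb]]]; simpl; rewrite ?Ea ?Eb; clear Ea Eb
  | (_ /\ _) \/ _ => destruct H as [[Ea Eb]|[Ea Eb]]; simpl; rewrite ?Ea ?Eb; clear Ea Eb
  | _ = _ => simpl; rewrite ?H
  end.

Ltac cl := solve [ split => //; let H := fresh in intro H; exfalso; apply: H; reflexivity | split => // ].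

Lemma tr_correct f : forall ei es (ia : nat -> univ G) sa (ia' : nat -> univ S) sa',
  ia 0 = inr e1 -> ia 1 = inr e2 -> sa 0 = edge_set F ->
  (forall n, ifree n f -> @Rind G e1 e2 (ei n) (ia n.+2) (ia' n)) ->
  (forall n, sfree n f -> @Rset G e1 e2 F (es n) sa n (sa' n)) ->
  (sat ia sa (tr ei es f) <-> sat ia' sa' f).
Proof.
elim: f => [x|x|x y|x X|x y|g IH|g IHg h IHh|g IHg h IHh|g IHg h IHh|n g IH|n g IH|n g IH|n g IH]
  ei es ia sa ia' sa' H0 H1 HF Hi Hs.
- rewrite /=; have := Rind_cases (Hi x (eqxx _)); case: (ei x) => Hx; dest Hx; cl.
- rewrite /=; have := Rind_cases (Hi x (eqxx _)); case: (ei x) => Hx; dest Hx; cl.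
- rewrite /=; have := Rind_cases (Hi x ltac:(by rewrite /= eqxx)); have := Rind_cases (Hi y ltac:(by rewrite /= eqxx ?orbT));
  case: (ei x); case: (ei y) => Hy Hx; dest Hx; dest Hy; try cl.
  all: rewrite /= /new_end /=; split.
  all: try by case=> ->.
  all: move=> /eqP E; injection E as E'; by rewrite E'.
- rewrite /=. have Hx := Hi x ltac:(by rewrite /= eqxx). have HX := Hs X ltac:(by rewrite /= eqxx).
  case: (es X) HX => [->|b [A B C D]].
  + have := Rind_cases Hx; case: (ei x) => H; dest H; rewrite ?HF ?mem_edge_set /= (@mem_edge_set S) /=; try cl.
    all: rewrite /lift_edges inE /=; done.
  + case: (ei x) Hx => /=.
    * by case=> n1 n2 ->; rewrite A.
    * by move=> ->; rewrite B; case: b {A B C D}; cl.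
    * by case=> h ->; rewrite C.
    * by case=> h ->; rewrite D.
- rewrite /=; have := Rind_cases (Hi x ltac:(by rewrite /= eqxx)); have := Rind_cases (Hi y ltac:(by rewrite /= eqxx ?orbT));
  case: (ei x); case: (ei y) => Hy Hx; dest Hx; dest Hy; try cl.
  1: by split=> E; injection E as E'; rewrite E'.
  1: by split=> E; injection E as E'; [rewrite (val_inj E') | rewrite E'].
  all: split=> E; injection E as E'; try discriminate;
       exfalso; move: E'; apply/eqP; rewrite ?(ends_loopfree e1) ?(ends_loopfree e2) //;
       rewrite eq_sym ?(ends_loopfree e1) ?(ends_loopfree e2) //.
- have := IH ei es ia sa ia' sa' H0 H1 HF Hi Hs; rewrite /=; tauto.
- have Ag := IHg ei es ia sa ia' sa' H0 H1 HF (fun n h => Hi n (introT orP (or_introl h)))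
     (fun n h => Hs n (introT orP (or_introl h))).
  have Ah := IHh ei es ia sa ia' sa' H0 H1 HF (fun n h => Hi n (introT orP (or_intror h)))
     (fun n h => Hs n (introT orP (or_intror h))).
  rewrite /=; tauto.
- have Ag := IHg ei es ia sa ia' sa' H0 H1 HF (fun n h => Hi n (introT orP (or_introl h)))
     (fun n h => Hs n (introT orP (or_introl h))).
  have Ah := IHh ei es ia sa ia' sa' H0 H1 HF (fun n h => Hi n (introT orP (or_intror h)))
     (fun n h => Hs n (introT orP (or_intror h))).
  rewrite /=; tauto.
- have Ag := IHg ei es ia sa ia' sa' H0 H1 HF (fun n h => Hi n (introT orP (or_introl h)))
     (fun n h => Hs n (introT orP (or_introl h))).
  have Ah := IHh ei es ia sa ia' sa' H0 H1 HF (fun n h => Hi n (introT orP (or_intror h)))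
     (fun n h => Hs n (introT orP (or_intror h))).
  rewrite /=; tauto.
- rewrite /= /exq.
  have step : forall k u u', @Rind G e1 e2 k u u' ->
      (sat (upd ia n.+2 u) sa (tr (upd ei n k) es g) <-> sat (upd ia' n u') sa' g).
  { move=> k u u' R; apply: IH => //.
    move=> m Hm; rewrite /upd !eqSS; case: (eqVneq m n) => [E|ne].
    + by subst m.
    + apply: Hi; by rewrite /= Hm andbT eq_sym ne. }
  have gv : forall k u, sat (upd ia n.+2 u) sa (guard k n.+2) -> @Rind G e1 e2 k u (decK e1 e2 k u).
  { move=> k u; case: k; rewrite /= /upd /= eqxx ?H0 ?H1 //=;
    first [by case=> h1 h2; split | by move=> h; split | idtac]. }
  have gs : forall u' : univ S, exists k u, sat (upd ia n.+2 u) sa (guard k n.+2) /\ @Rind G e1 e2 k u u'.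
  { case=> [[v|]|[kk|i]].
    + exists KOld, (inl v); rewrite /= /upd /= eqxx H0 H1; by split.
    + exists KNw, (ia 0); rewrite /= /upd /= eqxx; by split.
    + exists KOld, (inr (val kk)); rewrite /= /upd /= eqxx H0 H1 valK.
      have /andP [h1 h2] := valP kk.
      have n1 : (inr (val kk) : univ G) <> inr e1.
        by move=> E; injection E as E'; move/eqP: h1; apply.
      have n2 : (inr (val kk) : univ G) <> inr e2.
        by move=> E; injection E as E'; move/eqP: h2; apply.
      by split; split.
    + case: i => [[|[|[|[|j]]]] Hi4] //.
      * exists K1, (inl (ends e1).1); rewrite /= /upd /= eqxx H0 /= !eqxx; split => //; split => //.
        by congr (inr (inr _)); apply: val_inj.
      * exists K1, (inl (ends e1).2); rewrite /= /upd /= eqxx H0 /= !eqxx orbT; split => //; split => //.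
        rewrite eq_sym (negbTE (ends_loopfree e1)).
        by congr (inr (inr _)); apply: val_inj.
      * exists K2, (inl (ends e2).1); rewrite /= /upd /= eqxx H1 /= !eqxx; split => //; split => //.
        by congr (inr (inr _)); apply: val_inj.
      * exists K2, (inl (ends e2).2); rewrite /= /upd /= eqxx H1 /= !eqxx orbT; split => //; split => //.
        rewrite eq_sym (negbTE (ends_loopfree e2)).
        by congr (inr (inr _)); apply: val_inj. }
  split.
  + case=> [[|]|[|]] [u [Hg Ht]];
    [exists (decK e1 e2 KOld u); exact: (step _ _ _ (gv KOld u Hg)).1 Ht
    |exists (decK e1 e2 KNw u); exact: (step _ _ _ (gv KNw u Hg)).1 Ht
    |exists (decK e1 e2 K1 u); exact: (step _ _ _ (gv K1 u Hg)).1 Ht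
    |exists (decK e1 e2 K2 u); exact: (step _ _ _ (gv K2 u Hg)).1 Ht].
  + case=> u' Hu'; have [k [u [Hg R]]] := gs u'; have Ht := (step _ _ _ R).2 Hu'.
    by case: k Hg R Ht => Hg R Ht; [left;left|left;right|right;left|right;right]; exists u; split.
- rewrite /= /alq.
  have step : forall k u u', @Rind G e1 e2 k u u' ->
      (sat (upd ia n.+2 u) sa (tr (upd ei n k) es g) <-> sat (upd ia' n u') sa' g).
  { move=> k u u' R; apply: IH => //.
    move=> m Hm; rewrite /upd !eqSS; case: (eqVneq m n) => [E|ne].
    + by subst m.
    + apply: Hi; by rewrite /= Hm andbT eq_sym ne. }
  have gv : forall k u, sat (upd ia n.+2 u) sa (guard k n.+2) -> @Rind G e1 e2 k u (decK e1 e2 k u).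
  { move=> k u; case: k; rewrite /= /upd /= eqxx ?H0 ?H1 //=;
    first [by case=> h1 h2; split | by move=> h; split | idtac]. }
  have gs : forall u' : univ S, exists k u, sat (upd ia n.+2 u) sa (guard k n.+2) /\ @Rind G e1 e2 k u u'.
  { case=> [[v|]|[kk|i]].
    + exists KOld, (inl v); rewrite /= /upd /= eqxx H0 H1; by split.
    + exists KNw, (ia 0); rewrite /= /upd /= eqxx; by split.
    + exists KOld, (inr (val kk)); rewrite /= /upd /= eqxx H0 H1 valK.
      have /andP [h1 h2] := valP kk.
      have n1 : (inr (val kk) : univ G) <> inr e1.
        by move=> E; injection E as E'; move/eqP: h1; apply.
      have n2 : (inr (val kk) : univ G) <> inr e2.
        by move=> E; injection E as E'; move/eqP: h2; apply.
      by split; split.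
    + case: i => [[|[|[|[|j]]]] Hi4] //.
      * exists K1, (inl (ends e1).1); rewrite /= /upd /= eqxx H0 /= !eqxx; split => //; split => //.
        by congr (inr (inr _)); apply: val_inj.
      * exists K1, (inl (ends e1).2); rewrite /= /upd /= eqxx H0 /= !eqxx orbT; split => //; split => //.
        rewrite eq_sym (negbTE (ends_loopfree e1)).
        by congr (inr (inr _)); apply: val_inj.
      * exists K2, (inl (ends e2).1); rewrite /= /upd /= eqxx H1 /= !eqxx; split => //; split => //.
        by congr (inr (inr _)); apply: val_inj.
      * exists K2, (inl (ends e2).2); rewrite /= /upd /= eqxx H1 /= !eqxx orbT; split => //; split => //.
        rewrite eq_sym (negbTE (ends_loopfree e2)).
        by congr (inr (inr _)); apply: val_inj. }
  split.
  + case=> [[A B] [C D]] u'; have [k [u [Hg R]]] := gs u'; apply: (step _ _ _ R).1.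
    by case: k Hg R => Hg R; [exact: A u Hg | exact: B u Hg | exact: C u Hg | exact: D u Hg].
  + move=> Hall; split; split => u Hg;
    [exact: (step _ _ _ (gv KOld u Hg)).2 (Hall _)
    |exact: (step _ _ _ (gv KNw u Hg)).2 (Hall _)
    |exact: (step _ _ _ (gv K1 u Hg)).2 (Hall _)
    |exact: (step _ _ _ (gv K2 u Hg)).2 (Hall _)].
- rewrite /=.
  have stepS : forall b Z1 Z2 Z3 S', @Rset G e1 e2 F (SB b) (sa3 sa n Z1 Z2 Z3) n S' ->
     (sat ia (sa3 sa n Z1 Z2 Z3) (tr ei (upd es n (SB b)) g) <-> sat ia' (upd sa' n S') g).
  { move=> b Z1 Z2 Z3 S' R; apply: IH => //.
    move=> m Hm; rewrite [upd es _ _ _]/upd [upd sa' _ _ _]/upd.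
    case: (eqVneq m n) => [E|ne].
    - by subst m.
    - apply: (@Rset_ext G e1 e2 F _ sa).
      + by apply: sa3_other; apply/eqP.
      + by apply: Hs; rewrite /= eq_sym ne Hm. }
  have RE : forall Z1 Z2 Z3 b, @Rset G e1 e2 F (SB b) (sa3 sa n Z1 Z2 Z3) n (enc e1 e2 Z1 Z2 Z3 b).
  { move=> Z1 Z2 Z3 b; case: (sa3_at sa n Z1 Z2 Z3) => E1 E2 E3.
    by have := @enc_R G e1 e2 F b (sa3 sa n Z1 Z2 Z3) n; rewrite E1 E2 E3. }
  have RS : forall S' : {set univ S}, @Rset G e1 e2 F (SB ((inl None : univ S) \in S'))
     (sa3 sa n [set u | dec_old e1 e2 u \in S'] [set u | dec1 e1 e2 u \in S'] [set u | dec2 e1 e2 u \in S'])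
     n S'.
  { move=> S'; rewrite /Rset; case: (sa3_at sa n [set u | dec_old e1 e2 u \in S'] [set u | dec1 e1 e2 u \in S']
       [set u | dec2 e1 e2 u \in S']) => -> -> ->.
    by split => // *; rewrite inE. }
  split.
  + case=> Z1 [Z2 [Z3 [Hb|Hb]]].
    * exists (enc e1 e2 Z1 Z2 Z3 false); exact: (stepS _ _ _ _ _ (RE _ _ _ _)).1 Hb.
    * exists (enc e1 e2 Z1 Z2 Z3 true); exact: (stepS _ _ _ _ _ (RE _ _ _ _)).1 Hb.
  + case=> S' HS; have := (stepS _ _ _ _ _ (RS S')).2 HS.
    exists [set u | dec_old e1 e2 u \in S'], [set u | dec1 e1 e2 u \in S'], [set u | dec2 e1 e2 u \in S'].
    move: H; case: ((inl None : univ S) \in S') => H; [right|left]; exact: H.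
- rewrite /=.
  have stepS : forall b Z1 Z2 Z3 S', @Rset G e1 e2 F (SB b) (sa3 sa n Z1 Z2 Z3) n S' ->
     (sat ia (sa3 sa n Z1 Z2 Z3) (tr ei (upd es n (SB b)) g) <-> sat ia' (upd sa' n S') g).
  { move=> b Z1 Z2 Z3 S' R; apply: IH => //.
    move=> m Hm; rewrite [upd es _ _ _]/upd [upd sa' _ _ _]/upd.
    case: (eqVneq m n) => [E|ne].
    - by subst m.
    - apply: (@Rset_ext G e1 e2 F _ sa).
      + by apply: sa3_other; apply/eqP.
      + by apply: Hs; rewrite /= eq_sym ne Hm. }
  have RE : forall Z1 Z2 Z3 b, @Rset G e1 e2 F (SB b) (sa3 sa n Z1 Z2 Z3) n (enc e1 e2 Z1 Z2 Z3 b).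
  { move=> Z1 Z2 Z3 b; case: (sa3_at sa n Z1 Z2 Z3) => E1 E2 E3.
    by have := @enc_R G e1 e2 F b (sa3 sa n Z1 Z2 Z3) n; rewrite E1 E2 E3. }
  have RS : forall S' : {set univ S}, @Rset G e1 e2 F (SB ((inl None : univ S) \in S'))
     (sa3 sa n [set u | dec_old e1 e2 u \in S'] [set u | dec1 e1 e2 u \in S'] [set u | dec2 e1 e2 u \in S'])
     n S'.
  { move=> S'; rewrite /Rset; case: (sa3_at sa n [set u | dec_old e1 e2 u \in S'] [set u | dec1 e1 e2 u \in S']
       [set u | dec2 e1 e2 u \in S']) => -> -> ->.
    by split => // *; rewrite inE. }
  split.
  + move=> HA S'; have := stepS _ _ _ _ _ (RS S').
    have := HA [set u | dec_old e1 e2 u \in S'] [set u | dec1 e1 e2 u \in S'] [set u | dec2 e1 e2 u \in S'].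
    case: ((inl None : univ S) \in S') => -[Hf Ht] E; [exact: E.1 Ht|exact: E.1 Hf].
  + move=> HA Z1 Z2 Z3; split; exact: (stepS _ _ _ _ _ (RE _ _ _ _)).2 (HA _).
Qed.
End Sem2.

(* Individual variables 0,1 play x1,x2; set variable 0 plays Y. *)
Theorem lemma3p4 (phi : form) :
  (forall n, ~~ ifree n phi) ->
  (forall n, sfree n phi -> n = 0) ->
  exists phis : form,
    (forall n, ifree n phis -> n = 0 \/ n = 1) /\
    (forall n, sfree n phis -> n = 0) /\
    forall (G : graph) (F : {set gE G}) (e1 e2 : gE G),
      e1 != e2 -> e1 \notin F -> e2 \notin F ->
      forall (ia : nat -> univ G) (sa : nat -> {set univ G})
             (ia' : nat -> univ (splice e1 e2))
             (sa' : nat -> {set univ (splice e1 e2)}),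
        ia 0 = inr e1 -> ia 1 = inr e2 ->
        sa 0 = edge_set F ->
        sa' 0 = edge_set (lift_edges e1 e2 F) ->
        (sat ia sa phis <-> sat ia' sa' phi).
Proof.
move=> Hfi Hfs.
exists (tr (fun _ => KOld) (fun _ => SInit) phi); split; [|split].
- move=> n /tr_ifree [->|[->|[m [Hm _]]]]; auto.
  by move: (Hfi m); rewrite Hm.
- by move=> n /tr_sfree [->|[m [_ E _]]].
- move=> G F e1 e2 _ _ _ ia sa ia' sa' H0 H1 HF HF'.
  apply: (tr_correct (F:=F)) => //.
  + by move=> n Hn; move: (Hfi n); rewrite Hn.
  + by move=> n /Hfs ->.
Qed.
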